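(* Let $(V_1, V_2)$ be an irreducible $3$-finite pair. Then there is a unique $\lambda \in (0,1)$ such that $\sigma(C(V_1, V_2)) \cap (0, 1) = \{\lambda\}$. Moreover, the restriction of $C(V_1,V_2)$ to $(\ker C(V_1, V_2))^\perp$ is unitarily equivalent to the diagonal matrix $\operatorname{diag}(1,\lambda,-\lambda)$ on $\mathbb{C}^3$.
   Context: All Hilbert spaces are complex and separable. An isometric pair is a pair $(V_1,V_2)$ of commuting isometries. An isometry $V$ is a shift if $V^{*m}\to0$ strongly. A BCL pair is an isometric pair with $V_1V_2$ a shift. $[V_2^*,V_1] := V_2^*V_1 - V_1V_2^*$. A compact normal pair is a BCL pair with $[V_2^*,V_1]$ compact and normal. $C(V_1,V_2) := I - V_1V_1^* - V_2V_2^* + V_1V_2V_1^*V_2^*$. A $3$-finite pair is a compact normal pair with $\operatorname{rank} C(V_1,V_2)=3$. Irreducible: no closed subspace other than $\{0\}$ and the whole space invariant under $V_1,V_2,V_1^*,V_2^*$. *)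

(* Defs.v *)
From HB Require Import structures.
From mathcomp Require Import all_boot all_order all_algebra.
From mathcomp Require Import reals.
From mathcomp Require Import complex.
Set Implicit Arguments. Unset Strict Implicit. Unset Printing Implicit Defensive.
Import Order.TTheory GRing.Theory Num.Theory.
Local Open Scope ring_scope.

Section Hilbert.
Variables (R : realType) (H : lmodType R[i]) (ip : H -> H -> R[i]).

Definition nsq (x : H) : R[i] := ip x x.

Definition cvgH (u : nat -> H) (x : H) : Prop :=
  forall eps : R[i], 0 < eps -> exists N : nat, forall n, (N <= n)%N -> nsq (u n - x) < eps.

Definition cauchyH (u : nat -> H) : Prop :=
  forall eps : R[i], 0 < eps -> exists N : nat,
    forall n m, (N <= n)%N -> (N <= m)%N -> nsq (u n - u m) < eps.

(* ip is an inner product (linear in the first variable) making H a complex  *)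
(* separable Hilbert space.                                                   *)
Definition hilbert_space : Prop :=
  [/\ forall (a : R[i]) (x y z : H), ip (a *: x + y) z = a * ip x z + ip y z,
      forall x y : H, ip y x = Num.conj (ip x y),
      forall x : H, 0 <= ip x x,
      forall x : H, ip x x = 0 -> x = 0
    & (forall u : nat -> H, cauchyH u -> exists x, cvgH u x) /\ exists d : nat -> H, forall (x : H) (eps : R[i]), 0 < eps ->
        exists n, nsq (x - d n) < eps].

Definition bounded_op (T : H -> H) : Prop :=
  (forall (a : R[i]) (x y : H), T (a *: x + y) = a *: T x + T y) /\
  exists M : R[i], forall x, nsq (T x) <= M * nsq x.

Definition is_adjoint (T S : H -> H) : Prop :=
  bounded_op T /\ bounded_op S /\ forall x y, ip (T x) y = ip x (S y).

Definition isometry (V Vs : H -> H) : Prop := is_adjoint V Vs /\ forall x, Vs (V x) = x.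

Definition shift (V Vs : H -> H) : Prop :=
  isometry V Vs /\ forall x, cvgH (fun m => iter m Vs x) 0.

Definition isometric_pair (V1 V1s V2 V2s : H -> H) : Prop :=
  [/\ isometry V1 V1s, isometry V2 V2s & forall x, V1 (V2 x) = V2 (V1 x)].

Definition BCL_pair (V1 V1s V2 V2s : H -> H) : Prop :=
  isometric_pair V1 V1s V2 V2s /\ shift (fun x => V1 (V2 x)) (fun x => V2s (V1s x)).

Definition compact_op (T : H -> H) : Prop :=
  bounded_op T /\
  forall u : nat -> H, (exists M : R[i], forall n, nsq (u n) <= M) ->
    exists (phi : nat -> nat) (y : H), (forall n, (phi n < phi n.+1)%N) /\
      cvgH (fun n => T (u (phi n))) y.

Definition normal_op (T Ts : H -> H) : Prop :=
  is_adjoint T Ts /\ forall x, T (Ts x) = Ts (T x).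

Definition commutator (V1 V1s V2 V2s : H -> H) : H -> H :=
  fun x => V2s (V1 x) - V1 (V2s x).
Definition commutator_adj (V1 V1s V2 V2s : H -> H) : H -> H :=
  fun x => V1s (V2 x) - V2 (V1s x).

Definition compact_normal_pair (V1 V1s V2 V2s : H -> H) : Prop :=
  [/\ BCL_pair V1 V1s V2 V2s,
      compact_op (commutator V1 V1s V2 V2s)
    & normal_op (commutator V1 V1s V2 V2s) (commutator_adj V1 V1s V2 V2s)].

Definition defect (V1 V1s V2 V2s : H -> H) : H -> H :=
  fun x => x - V1 (V1s x) - V2 (V2s x) + V1 (V2 (V1s (V2s x))).

Definition rank_eq (T : H -> H) (n : nat) : Prop :=
  exists b : 'I_n -> H,
    (forall c : 'I_n -> R[i], \sum_(i < n) c i *: b i = 0 -> forall i, c i = 0) /\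
    (forall y : H, (exists x, y = T x) <-> exists c : 'I_n -> R[i], y = \sum_(i < n) c i *: b i).

Definition three_finite_pair (V1 V1s V2 V2s : H -> H) : Prop :=
  compact_normal_pair V1 V1s V2 V2s /\ rank_eq (defect V1 V1s V2 V2s) 3.

Definition closed_subspace (M : H -> Prop) : Prop :=
  [/\ M 0, forall (a : R[i]) x y, M x -> M y -> M (a *: x + y)
    & forall (u : nat -> H) x, (forall n, M (u n)) -> cvgH u x -> M x].

Definition irreducible_pair (V1 V1s V2 V2s : H -> H) : Prop :=
  forall M : H -> Prop, closed_subspace M ->
    (forall x, M x -> [/\ M (V1 x), M (V2 x), M (V1s x) & M (V2s x)]) ->
    (forall x, M x -> x = 0) \/ (forall x, M x).

Definition spectrum (T : H -> H) (z : R[i]) : Prop :=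
  ~ exists S : H -> H, bounded_op S /\
      forall x, S (T x - z *: x) = x /\ T (S x) - z *: S x = x.

(* The restriction of T to (ker T)^perp is unitarily equivalent to           *)
(* diag(d 0, d 1, d 2) on C^3: there is a unitary U : C^3 -> (ker T)^perp,    *)
(* U c = \sum_i c i *: e i with e an orthonormal basis of (ker T)^perp, and   *)
(* T (U c) = U (diag d c), i.e. T (e i) = d i *: e i.                        *)
Definition restr_kerperp_unitarily_diag (T : H -> H) (d : 'I_3 -> R[i]) : Prop :=
  exists e : 'I_3 -> H,
    [/\ forall i j, ip (e i) (e j) = (i == j)%:R,
        forall y : H, (forall x, T x = 0 -> ip y x = 0) <->
                      exists c : 'I_3 -> R[i], y = \sum_(i < 3) c i *: e i
      & forall i, T (e i) = d i *: e i].

End Hilbert.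

Definition diag3 (R : realType) (a b c : R[i]) : 'I_3 -> R[i] :=
  fun i => if val i == 0%N then a else if val i == 1%N then b else c.

(* Main.v *)
Require Import Defs.
From HB Require Import structures.
From mathcomp Require Import all_boot all_order all_algebra.
From mathcomp Require Import reals complex spectral.
From mathcomp Require Import ring.
Set Implicit Arguments. Unset Strict Implicit. Unset Printing Implicit Defensive.
Import Order.TTheory GRing.Theory Num.Theory.
Local Open Scope ring_scope.

Section Conj.
Variable C : numClosedFieldType.
Lemma cjD (x y : C) : (x + y)^* = x^* + y^*. Proof. exact: rmorphD. Qed.
Lemma cjB (x y : C) : (x - y)^* = x^* - y^*. Proof. exact: rmorphB. Qed.
Lemma cjM (x y : C) : (x * y)^* = x^* * y^*. Proof. exact: rmorphM. Qed.
Lemma cjN (x : C) : (- x)^* = - x^*. Proof. exact: rmorphN. Qed.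
Lemma cj0 : (0 : C)^* = 0. Proof. exact: rmorph0. Qed.
Lemma cj1 : (1 : C)^* = 1. Proof. exact: rmorph1. Qed.
Lemma cjV (x : C) : (x^-1)^* = (x^*)^-1. Proof. exact: fmorphV. Qed.
Lemma cjK (x : C) : x^*^* = x. Proof. exact: conjCK. Qed.
Lemma cj_sum n (f : 'I_n -> C) : (\sum_(i < n) f i)^* = \sum_(i < n) (f i)^*.
Proof. exact: rmorph_sum. Qed.
Lemma cj_nat n : (n%:R : C)^* = n%:R. Proof. exact: rmorph_nat. Qed.
End Conj.

Section Main.
Variables (R : realType) (H : lmodType R[i]) (ip : H -> H -> R[i]).
Hypothesis ipL : forall (a : R[i]) (x y z : H), ip (a *: x + y) z = a * ip x z + ip y z.
Hypothesis ipC : forall x y : H, ip y x = (ip x y)^*.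
Hypothesis ipP : forall x : H, 0 <= ip x x.
Hypothesis ipD : forall x : H, ip x x = 0 -> x = 0.

Lemma ip0l y : ip 0 y = 0.
Proof. have := ipL 1 0 0 y; rewrite scaler0 addr0 mul1r => /eqP.
by rewrite -{1}[ip 0 y]addr0 eq_sym (inj_eq (addrI _)) => /eqP. Qed.
Lemma ipDl x y z : ip (x + y) z = ip x z + ip y z.
Proof. by rewrite -[x]scale1r ipL mul1r scale1r. Qed.
Lemma ipZl a x z : ip (a *: x) z = a * ip x z.
Proof. by rewrite -[a *: x]addr0 ipL ip0l addr0. Qed.
Lemma ipNl x z : ip (- x) z = - ip x z.
Proof. by rewrite -scaleN1r ipZl mulN1r. Qed.
Lemma ipBl x y z : ip (x - y) z = ip x z - ip y z.
Proof. by rewrite ipDl ipNl. Qed.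
Lemma ip0r y : ip y 0 = 0.
Proof. by rewrite ipC ip0l cj0. Qed.
Lemma ipDr x y z : ip z (x + y) = ip z x + ip z y.
Proof. by rewrite ipC ipDl cjD -!ipC. Qed.
Lemma ipZr a x z : ip z (a *: x) = a^* * ip z x.
Proof. by rewrite ipC ipZl cjM -!ipC. Qed.
Lemma ipNr x z : ip z (- x) = - ip z x.
Proof. by rewrite ipC ipNl cjN -ipC. Qed.
Lemma ipBr x y z : ip z (x - y) = ip z x - ip z y.
Proof. by rewrite ipDr ipNr. Qed.
Lemma ip_suml n (a : 'I_n -> R[i]) (g : 'I_n -> H) z :
  ip (\sum_(i < n) a i *: g i) z = \sum_(i < n) a i * ip (g i) z.
Proof.
elim/big_rec2: _ => [|i s y _ <-]; first by rewrite ip0l.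
by rewrite ipDl ipZl.
Qed.
Lemma ip_sumr n (a : 'I_n -> R[i]) (g : 'I_n -> H) z :
  ip z (\sum_(i < n) a i *: g i) = \sum_(i < n) (a i)^* * ip z (g i).
Proof.
elim/big_rec2: _ => [|i s y _ <-]; first by rewrite ip0r.
by rewrite ipDr ipZr.
Qed.
Lemma ip_real x : (ip x x)^* = ip x x.
Proof. by rewrite -ipC. Qed.
Lemma ip_eq a b : (forall y, ip a y = ip b y) -> a = b.
Proof. move=> h; apply/eqP; rewrite -subr_eq0; apply/eqP/ipD. by rewrite ipBl h subrr. Qed.
Lemma ip_eq0 a : (forall y, ip a y = 0) -> a = 0.
Proof. by move=> h; apply: ipD; rewrite h. Qed.
Lemma ip_neq0 x : x != 0 -> 0 < ip x x.
Proof. move=> h; rewrite lt_def ipP andbT; apply: contra h => /eqP/ipD ->; by []. Qed.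

Lemma ip_CS x y : ip x y * (ip x y)^* <= ip x x * ip y y.
Proof.
have [->|yn0] := eqVneq y 0; first by rewrite ip0r cj0 mul0r ip0r mulr0.
have py := ip_neq0 yn0.
set v := ip y y *: x - ip x y *: y.
have h := ipP v.
have e : ip v v = ip y y * (ip x x * ip y y - ip x y * (ip x y)^*).
  rewrite /v !ipBl !ipBr !ipZl !ipZr ip_real -(ipC x y).
  ring.
move: h; rewrite e pmulr_rge0 // subr_ge0. by [].
Qed.

Definition lin (f : H -> H) := forall a x y, f (a *: x + y) = a *: f x + f y.

Section Lin.
Variable f : H -> H.
Hypothesis hf : forall a x y, f (a *: x + y) = a *: f x + f y.
Lemma lin0 : f 0 = 0.
Proof. have := hf 1 0 0; rewrite scaler0 addr0 scale1r => /eqP.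
by rewrite -{1}[f 0]addr0 eq_sym (inj_eq (addrI _)) => /eqP. Qed.
Lemma linD x y : f (x + y) = f x + f y.
Proof. have := hf 1 x y. by rewrite !scale1r. Qed.
Lemma linZ a x : f (a *: x) = a *: f x.
Proof. by rewrite -[a *: x]addr0 hf lin0 addr0. Qed.
Lemma linN x : f (- x) = - f x.
Proof. by rewrite -scaleN1r linZ scaleN1r. Qed.
Lemma linB x y : f (x - y) = f x - f y.
Proof. by rewrite linD linN. Qed.
Lemma lin_sum n (a : 'I_n -> R[i]) (g : 'I_n -> H) :
  f (\sum_(i < n) a i *: g i) = \sum_(i < n) a i *: f (g i).
Proof.
elim/big_rec2: _ => [|i s y _ <-]; first by rewrite lin0.
by rewrite hf.
Qed.
End Lin.

Variables (V1 V1s V2 V2s : H -> H).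
Hypothesis l1 : lin V1.
Hypothesis l1s : lin V1s.
Hypothesis l2 : lin V2.
Hypothesis l2s : lin V2s.
Hypothesis a1 : forall x y, ip (V1 x) y = ip x (V1s y).
Hypothesis a2 : forall x y, ip (V2 x) y = ip x (V2s y).
Hypothesis i1 : forall x, V1s (V1 x) = x.
Hypothesis i2 : forall x, V2s (V2 x) = x.
Hypothesis c12 : forall x, V1 (V2 x) = V2 (V1 x).

Lemma a1r x y : ip x (V1 y) = ip (V1s x) y.
Proof. by rewrite ipC a1 -ipC. Qed.
Lemma a2r x y : ip x (V2 y) = ip (V2s x) y.
Proof. by rewrite ipC a2 -ipC. Qed.

Lemma c12s x : V1s (V2s x) = V2s (V1s x).
Proof.
apply: ip_eq => y.
by rewrite -a1r -a2r -a2r -a1r c12.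
Qed.

Lemma nV1 x y : ip (V1 x) (V1 y) = ip x y.
Proof. by rewrite a1 i1. Qed.
Lemma nV2 x y : ip (V2 x) (V2 y) = ip x y.
Proof. by rewrite a2 i2. Qed.

Notation C := (defect V1 V1s V2 V2s).

Lemma linC : lin C.
Proof.
move=> a x y; rewrite /defect.
rewrite !(linD l1s, linZ l1s, linD l2s, linZ l2s, linD l1, linZ l1, linD l2, linZ l2).
apply: ip_eq => z.
by rewrite !(ipDl, ipBl, ipZl, ipNl); ring.
Qed.


Ltac vsolve := apply: ip_eq => ?; rewrite ?(ipDl, ipBl, ipZl, ipNl, ip0l); ring.

Lemma nP1 x : ip (x - V1 (V1s x)) (x - V1 (V1s x)) = ip x x - ip (V1s x) (V1s x).
Proof. rewrite !(ipBl, ipBr) nV1 a1 a1r. ring. Qed.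
Lemma nP2 x : ip (x - V2 (V2s x)) (x - V2 (V2s x)) = ip x x - ip (V2s x) (V2s x).
Proof. rewrite !(ipBl, ipBr) nV2 a2 a2r. ring. Qed.
Lemma contr1 x : ip (V1s x) (V1s x) <= ip x x.
Proof. by have := ipP (x - V1 (V1s x)); rewrite nP1 subr_ge0. Qed.
Lemma contr2 x : ip (V2s x) (V2s x) <= ip x x.
Proof. by have := ipP (x - V2 (V2s x)); rewrite nP2 subr_ge0. Qed.

Lemma Cq x : ip (C x) x = ip x x - ip (V1s x) (V1s x) - ip (V2s x) (V2s x)
   + ip (V1s (V2s x)) (V1s (V2s x)).
Proof. by rewrite /defect !(ipDl, ipNl) !a1 !a2 -!c12s. Qed.

Lemma C_sa x y : ip (C x) y = ip x (C y).
Proof.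
rewrite /defect !(ipDl, ipNl, ipDr, ipNr) !a1 !a2 !a1r !a2r -!c12s.
by rewrite -!a1r -!a2r.
Qed.

Lemma VC0 x : V2s (V1s (C x)) = 0.
Proof.
rewrite /defect !(linD l1s, linN l1s) !i1 !(linD l2s, linN l2s) -!c12s !i2.
by rewrite subrr sub0r addrC subrr.
Qed.

Lemma CW e mu : C e = mu *: e -> mu != 0 -> V2s (V1s e) = 0 /\ V1s (V2s e) = 0.
Proof.
move=> He mu0; have := VC0 e; rewrite He (linZ l1s) (linZ l2s) => /eqP.
rewrite scaler_eq0 (negbTE mu0) /= => /eqP h; split=> //; by rewrite c12s.
Qed.

Lemma eig1 e : C e = e -> V2s (V1s e) = 0 -> V1s e = 0 /\ V2s e = 0.
Proof.
move=> He h; have := Cq e; rewrite He c12s h ip0l addr0.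
move=> /eqP; rewrite -addrA -{1}[ip e e]addr0 eq_sym (inj_eq (addrI _)).
rewrite -opprD oppr_eq0 paddr_eq0 ?ipP // => /andP[/eqP/ipD h1 /eqP/ipD h2].
by [].
Qed.

Lemma eig1c e : V1s e = 0 -> V2s e = 0 -> C e = e.
Proof. move=> h1 h2; by rewrite /defect h1 h2 !(lin0 l1, lin0 l2, lin0 l1s) !subr0 addr0. Qed.

Notation T := (commutator V1 V1s V2 V2s).
Notation Ts := (commutator_adj V1 V1s V2 V2s).
Hypothesis nT : forall x, T (Ts x) = Ts (T x).

Lemma Tadj x y : ip (T x) y = ip x (Ts y).
Proof. rewrite /commutator /commutator_adj !(ipBl, ipBr) -a2r a1 a1 -a2r. by []. Qed.
Lemma Tadjr x y : ip x (T y) = ip (Ts x) y.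
Proof. by rewrite ipC Tadj -ipC. Qed.
Lemma nTT z : ip (T z) (T z) = ip (Ts z) (Ts z).
Proof. by rewrite Tadj -nT Tadjr. Qed.
Lemma T0 z : T z = 0 -> Ts z = 0.
Proof. move=> h; apply: ipD; by rewrite -nTT h ip0l. Qed.
Lemma Ts0 z : Ts z = 0 -> T z = 0.
Proof. move=> h; apply: ipD; by rewrite nTT h ip0l. Qed.

Lemma eigm1 e : C e = - e -> [/\ V1s (V1s e) = 0, V2s (V1s e) = 0 & V1 (V1s e) = e].
Proof.
move=> He.
have [w12 w21] : V2s (V1s e) = 0 /\ V1s (V2s e) = 0.
  by apply: (@CW e (- 1)); [rewrite He scaleN1r | rewrite oppr_eq0 oner_eq0].
have q := Cq e; rewrite He w21 ip0l addr0 ipNl in q.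
have n1 : ip (V1s e) (V1s e) = ip e e.
  have h : (ip e e - ip (V1s e) (V1s e)) + (ip e e - ip (V2s e) (V2s e)) = 0.
    rewrite (_ : (ip e e - ip (V1s e) (V1s e)) + (ip e e - ip (V2s e) (V2s e)) = (ip e e - ip (V1s e) (V1s e) - ip (V2s e) (V2s e)) + ip e e); last by ring.
    by rewrite -q addNr.
  move: h => /eqP; rewrite paddr_eq0 ?subr_ge0 ?contr1 ?contr2 // => /andP[/eqP h _].
  by apply/eqP; rewrite eq_sym -subr_eq0 h.
have n2 : ip (V2s e) (V2s e) = ip e e.
  have h : (ip e e - ip (V1s e) (V1s e)) + (ip e e - ip (V2s e) (V2s e)) = 0.
    rewrite (_ : (ip e e - ip (V1s e) (V1s e)) + (ip e e - ip (V2s e) (V2s e)) = (ip e e - ip (V1s e) (V1s e) - ip (V2s e) (V2s e)) + ip e e); last by ring.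
    by rewrite -q addNr.
  move: h => /eqP; rewrite paddr_eq0 ?subr_ge0 ?contr1 ?contr2 // => /andP[_ /eqP h].
  by apply/eqP; rewrite eq_sym -subr_eq0 h.
have Vy : V1 (V1s e) = e.
  have : ip (e - V1 (V1s e)) (e - V1 (V1s e)) = 0 by rewrite nP1 n1 subrr.
  by move/ipD/eqP; rewrite subr_eq0 => /eqP <-.
split=> //.
set y := V1s e.
have Ty : T y = V2s e by rewrite /commutator /y Vy w12 (lin0 l1) subr0.
have Tsy : Ts y = V1s (V2 (y - V1 (V1s y))).
  by rewrite /commutator_adj (linB l2) (linB l1s) -c12 i1.
have h1 : ip (Ts y) (Ts y) = ip y y by rewrite -nTT Ty n2 /y n1.
have h2 : ip (Ts y) (Ts y) <= ip y y - ip (V1s y) (V1s y).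
  by rewrite Tsy -nP1 -(nV2 (y - _)); apply: contr1.
move: h2; rewrite h1 -subr_ge0 (_ : ip y y - ip (V1s y) (V1s y) - ip y y = - ip (V1s y) (V1s y)); last by ring.
rewrite oppr_ge0 => h3.
apply: ipD; apply/eqP; rewrite eq_le h3 ipP //.
Qed.


Lemma eig_range e mu : C e = mu *: e -> ip e e = 1 -> mu != 0 ->
  mu \is Num.real /\ -1 <= mu <= 1.
Proof.
move=> He e1 mu0.
have [w12 w21] := CW He mu0.
have hm : mu = ip (C e) e by rewrite He ipZl e1 mulr1.
split.
  apply/CrealP; rewrite hm -ipC -C_sa; by [].
have q := Cq e; rewrite w21 ip0l addr0 -hm e1 in q.
have c1 := contr1 e; have c2 := contr2 e; rewrite e1 in c1 c2.
rewrite q; apply/andP; split.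
  rewrite -subr_ge0 (_ : 1 - ip (V1s e) (V1s e) - ip (V2s e) (V2s e) - -1 =
     (1 - ip (V1s e) (V1s e)) + (1 - ip (V2s e) (V2s e))); last by ring.
  by rewrite addr_ge0 // subr_ge0.
rewrite -subr_ge0 (_ : 1 - (1 - ip (V1s e) (V1s e) - ip (V2s e) (V2s e)) =
     ip (V1s e) (V1s e) + ip (V2s e) (V2s e)); last by ring.
by rewrite addr_ge0 // ipP.
Qed.

Definition fD e := V1 (V1s e) - V2 (V2s e).

Lemma linfD : lin fD.
Proof.
move=> a x y; rewrite /fD !(linD l1s, linZ l1s, linD l2s, linZ l2s, linD l1, linZ l1, linD l2, linZ l2).
vsolve.
Qed.

Lemma pairing e mu : C e = mu *: e -> mu != 0 ->
  C (fD e) = (- mu) *: fD e /\ (mu != 1 -> mu != -1 -> e != 0 -> fD e != 0).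
Proof.
move=> He mu0; have [w12 w21] := CW He mu0.
set a := V1 (V1s e); set b := V2 (V2s e).
have Ce : C e = e - a - b by rewrite /defect w21 (lin0 l2) (lin0 l1) addr0.
have hs : b = (1 - mu) *: e - a.
  have : e - a - b = mu *: e by rewrite -Ce.
  move=> h; have -> : (1 - mu) *: e - a = e - a - mu *: e by vsolve.
  rewrite -h; vsolve.
have V2a : V2s a = - mu *: V2s e.
  have : V2s b = V2s e by rewrite /b i2.
  rewrite hs (linB l2s) (linZ l2s) => h.
  have -> : V2s a = (1 - mu) *: V2s e - V2s e by rewrite -{2}h; vsolve.
  vsolve.
have V1b : V1s b = - mu *: V1s e.
  have : V1s a = V1s e by rewrite /a i1.
  have ha : a = (1 - mu) *: e - b by rewrite hs; vsolve.
  rewrite ha (linB l1s) (linZ l1s) => h.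
  have -> : V1s b = (1 - mu) *: V1s e - V1s e by rewrite -{2}h; vsolve.
  vsolve.
have Ca : C a = mu *: b.
  rewrite /defect V2a (linZ l1s) w21 scaler0 (lin0 l2) (lin0 l1) addr0.
  rewrite {2}/a i1 (linZ l2) -/b; vsolve.
have Cb : C b = mu *: a.
  rewrite /defect V1b (c12s b) V1b (linZ l2s) w12 scaler0 (lin0 l2) (lin0 l1) addr0.
  rewrite /b i2 (linZ l1) -/a -/b; vsolve.
split.
  rewrite /fD -/a -/b (linB linC) Ca Cb; vsolve.
move=> m1 m2 en0; apply/negP => /eqP h0.
have ab : a = b by apply/eqP; rewrite -subr_eq0; apply/eqP; rewrite -h0.
have : V1 (V1s b) = - mu *: a by rewrite V1b (linZ l1).
rewrite -ab /a i1 -/a => h.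
have a0 : a = 0.
  have : (1 + mu) *: a = 0 by rewrite scalerDl scale1r {1}h; vsolve.
  move/eqP; rewrite scaler_eq0 => /orP[|/eqP //].
  by rewrite addrC addr_eq0 (negbTE m2).
have : (1 - mu) *: e = 0 by rewrite -[LHS]subr0 -a0 -hs -ab a0.
move/eqP; rewrite scaler_eq0 => /orP[|]; first by rewrite subr_eq0 eq_sym (negbTE m1).
by rewrite (negbTE en0).
Qed.

Lemma nsqN v : ip (- v) (- v) = ip v v.
Proof. by rewrite ipNl ipNr opprK. Qed.

Lemma cvg_orth (u : nat -> H) x y :
  cvgH ip u x -> (forall n, ip (u n) y = 0) -> ip x y = 0.
Proof.
move=> hc hu; apply/eqP; apply/negP => /negP cn0.
set c := ip x y.
have apos : 0 < c * c^* by rewrite -normCK exprn_gt0 // normr_gt0.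
have ny : 0 < ip y y + 1 by rewrite (lt_le_trans ltr01) // lerDr ipP.
set eps := (c * c^*) / (ip y y + 1).
have epos : 0 < eps by rewrite divr_gt0.
have [N hN] := hc eps epos.
have hn := hN N (leqnn N).
have e1 : c = ip (x - u N) y by rewrite ipBl hu subr0.
have cs := ip_CS (x - u N) y.
rewrite -e1 -nsqN opprB in cs.
have : c * c^* < c * c^*.
  apply: (le_lt_trans cs).
  apply: (le_lt_trans (y := eps * ip y y)).
    by rewrite ler_wpM2r // ?ipP // ltW.
  rewrite -[X in _ < X](divfK (lt0r_neq0 ny) (c * c^*)) -/eps.
  by rewrite ltr_pM2l // ltrDl ltr01.
by rewrite ltxx.
Qed.

Lemma iterV2V1 a z : V2 (iter a V1 z) = iter a V1 (V2 z).
Proof. elim: a => //= a IH; by rewrite -c12 IH. Qed.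

Lemma reduc x0 x' : irreducible_pair ip V1 V1s V2 V2s ->
  V1s x0 = 0 -> V2s x0 = 0 -> V1s x' = 0 -> V2s x' = 0 ->
  x0 != 0 -> x' != 0 -> ip x0 x' = 0 -> V2s (V1 x0) = 0 -> False.
Proof.
move=> irr h1 h2 h1' h2' nz nz' o TT.
have Tx0 : T x0 = 0 by rewrite /commutator TT h2 (lin0 l1) subrr.
have iV2 : forall b, V1s (iter b V2 x0) = 0 /\ T (iter b V2 x0) = 0.
  elim=> [|b [hb1 hb2]] //=.
  have := T0 hb2; rewrite /commutator_adj hb1 (lin0 l2) subr0 => hs.
  split=> //.
  by rewrite /commutator c12 !i2 subrr.
have iV1 : forall a, V2s (iter a V1 x0) = 0 /\ Ts (iter a V1 x0) = 0.
  elim=> [|a [ha1 ha2]] //=; first by split=> //; exact: T0.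
  have := Ts0 ha2; rewrite /commutator ha1 (lin0 l1) subr0 => hs.
  split=> //.
  by rewrite /commutator_adj -c12 !i1 subrr.
pose g a b := iter a V1 (iter b V2 x0).
pose M := fun x => forall y, (forall a b, ip (g a b) y = 0) -> ip x y = 0.
have cl : closed_subspace ip M.
  split.
  - by move=> y _; rewrite ip0l.
  - by move=> c x y hx hy z hz; rewrite ipL hx // hy // mulr0 addr0.
  - move=> u x hu hc y hy; apply: (cvg_orth hc) => n; exact: hu.
have inv : forall x, M x -> [/\ M (V1 x), M (V2 x), M (V1s x) & M (V2s x)].
  move=> x hx; split.
  - move=> y hy; rewrite a1; apply: hx => a b; by rewrite -a1 (hy a.+1 b).
  - move=> y hy; rewrite a2; apply: hx => a b.
    by rewrite -a2 /g iterV2V1 (hy a b.+1).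
  - move=> y hy; rewrite -a1r; apply: hx => a b.
    rewrite a1r /g; case: a => [|a] /=; first by rewrite (iV2 b).1 ip0l.
    by rewrite i1 (hy a b).
  - move=> y hy; rewrite -a2r; apply: hx => a b.
    rewrite a2r /g; case: b => [|b] /=; first by rewrite (iV1 a).1 ip0l.
    by rewrite -iterV2V1 i2 (hy a b).
have Mx0 : M x0 by move=> y hy; exact: (hy 0%N 0%N).
have ort : forall a b, ip (g a b) x' = 0.
  move=> [|a] b /=; last by rewrite a1 h1' ip0r.
  case: b => [|b] //=; by rewrite a2 h2' ip0r.
case: (irr M cl inv) => h.
  by move: nz; rewrite (h x0 Mx0) eqxx.
have := h x' x' ort => /ipD; move/eqP; by rewrite (negbTE nz').
Qed.

Record EB3 (e0 e1 e2 : H) (m0 m1 m2 : R[i]) : Prop := MkEB3 {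
  n00 : ip e0 e0 = 1; n11 : ip e1 e1 = 1; n22 : ip e2 e2 = 1;
  n01 : ip e0 e1 = 0; n02 : ip e0 e2 = 0; n12 : ip e1 e2 = 0;
  ce0 : C e0 = m0 *: e0; ce1 : C e1 = m1 *: e1; ce2 : C e2 = m2 *: e2;
  m0n : m0 != 0; m1n : m1 != 0; m2n : m2 != 0;
  cexp : forall x, C x = (m0 * ip x e0) *: e0 + (m1 * ip x e1) *: e1 + (m2 * ip x e2) *: e2 }.

Lemma ip_sym0 x y : ip x y = 0 -> ip y x = 0.
Proof. by move=> h; rewrite ipC h cj0. Qed.

Section EB.
Variables (e0 e1 e2 : H) (m0 m1 m2 : R[i]).
Hypothesis eb : EB3 e0 e1 e2 m0 m1 m2.

Lemma EBo : [/\ ip e1 e0 = 0, ip e2 e0 = 0 & ip e2 e1 = 0].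
Proof. by split; apply: ip_sym0; case: eb. Qed.

Lemma EBc a b c : [/\ ip (a *: e0 + b *: e1 + c *: e2) e0 = a,
   ip (a *: e0 + b *: e1 + c *: e2) e1 = b & ip (a *: e0 + b *: e1 + c *: e2) e2 = c].
Proof.
have [o10 o20 o21] := EBo.
case: eb => h00 h11 h22 h01 h02 h12 *.
by rewrite !(ipDl, ipZl) h00 h11 h22 h01 h02 h12 o10 o20 o21; split; ring.
Qed.

Lemma EBn0 : [/\ e0 != 0, e1 != 0 & e2 != 0].
Proof.
case: eb => h00 h11 h22 *; split; apply/negP => /eqP h.
- by move: h00; rewrite h ip0l => /eqP; rewrite eq_sym oner_eq0.
- by move: h11; rewrite h ip0l => /eqP; rewrite eq_sym oner_eq0.
- by move: h22; rewrite h ip0l => /eqP; rewrite eq_sym oner_eq0.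
Qed.

Lemma EBeig v nu : C v = nu *: v -> nu != 0 ->
  [/\ v = ip v e0 *: e0 + ip v e1 *: e1 + ip v e2 *: e2,
      m0 != nu -> ip v e0 = 0, m1 != nu -> ip v e1 = 0 & m2 != nu -> ip v e2 = 0].
Proof.
move=> hv nu0.
have E := cexp eb v; rewrite hv in E.
have [c0 c1 c2] := EBc (m0 * ip v e0) (m1 * ip v e1) (m2 * ip v e2).
have k0 : nu * ip v e0 = m0 * ip v e0 by rewrite -c0 -E ipZl.
have k1 : nu * ip v e1 = m1 * ip v e1 by rewrite -c1 -E ipZl.
have k2 : nu * ip v e2 = m2 * ip v e2 by rewrite -c2 -E ipZl.
have z : forall m c, nu * c = m * c -> m != nu -> c = 0.
  move=> m c h mn; apply/eqP; move: h => /eqP; rewrite -subr_eq0 -mulrBl mulf_eq0.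
  by rewrite subr_eq0 eq_sym (negbTE mn).
split; last 3 first.
- exact: z k0.
- exact: z k1.
- exact: z k2.
apply: (@scalerI _ _ nu) => //.
rewrite E !scalerDr !scalerA -k0 -k1 -k2; by [].
Qed.

Lemma EBcx x : [/\ ip (C x) e0 = m0 * ip x e0, ip (C x) e1 = m1 * ip x e1 &
   ip (C x) e2 = m2 * ip x e2].
Proof.
have [c0 c1 c2] := EBc (m0 * ip x e0) (m1 * ip x e1) (m2 * ip x e2).
by rewrite (cexp eb x) c0 c1 c2.
Qed.

End EB.

Lemma EB_swap01 e0 e1 e2 m0 m1 m2 : EB3 e0 e1 e2 m0 m1 m2 -> EB3 e1 e0 e2 m1 m0 m2.
Proof.
move=> eb; have [o10 o20 o21] := EBo eb.
case: eb => h00 h11 h22 h01 h02 h12 c0 c1 c2 q0 q1 q2 ex; split => //.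
by move=> x; rewrite ex; vsolve.
Qed.
Lemma EB_swap12 e0 e1 e2 m0 m1 m2 : EB3 e0 e1 e2 m0 m1 m2 -> EB3 e0 e2 e1 m0 m2 m1.
Proof.
move=> eb; have [o10 o20 o21] := EBo eb.
case: eb => h00 h11 h22 h01 h02 h12 c0 c1 c2 q0 q1 q2 ex; split => //.
by move=> x; rewrite ex; vsolve.
Qed.


Lemma mneg (m : R[i]) : m != 0 -> m != - m.
Proof.
move=> h; apply/negP => /eqP e.
have : m *+ 2 = 0 by rewrite mulr2n {1}e addNr.
by move/eqP; rewrite mulrn_eq0 /= (negbTE h).
Qed.

Lemma m1n1 : (-1 : R[i]) != 1.
Proof. by rewrite -subr_eq0 (_ : (-1 - 1 : R[i]) = - 2%:R) ?oppr_eq0 ?pnatr_eq0 //; ring. Qed.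

Lemma EB_B e0 e1 e2 m0 m1 m2 : EB3 e0 e1 e2 m0 m1 m2 -> m0 != 1 -> m0 != -1 ->
  m1 = - m0 \/ m2 = - m0.
Proof.
move=> eb h1 h2; have [n0 _ _] := EBn0 eb.
have [Cf fn] := pairing (ce0 eb) (m0n eb).
have f0 := fn h1 h2 n0.
have nm : - m0 != 0 by rewrite oppr_eq0 (m0n eb).
have [E z0 z1 z2] := EBeig eb Cf nm.
case: (eqVneq m1 (- m0)) => [->|q1]; first by left.
case: (eqVneq m2 (- m0)) => [->|q2]; first by right.
move: f0; rewrite E z0 ?mneg ?(m0n eb) // z1 // z2 // !scale0r !addr0 eqxx //.
Qed.

Lemma EB_C e0 e1 e2 m0 m1 m2 : EB3 e0 e1 e2 m0 m1 m2 -> m0 = m1 -> m0 != 1 -> m0 != -1 ->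
  False.
Proof.
move=> eb e01 h1 h2; have [n0 n1 _] := EBn0 eb.
have mm := mneg (m0n eb).
have m2e : m2 = - m0.
  case: (EB_B eb h1 h2) => // h; by move: mm; rewrite {1}e01 h eqxx.
have ce1' : C e1 = m0 *: e1 by rewrite e01 (ce1 eb).
have [Cf0 fn0] := pairing (ce0 eb) (m0n eb).
have [Cf1 fn1] := pairing ce1' (m0n eb).
have nm : - m0 != 0 by rewrite oppr_eq0 (m0n eb).
have [E0 z00 z01 _] := EBeig eb Cf0 nm.
have [E1 z10 z11 _] := EBeig eb Cf1 nm.
rewrite -e01 in z01 z11.
set f0 := fD e0 in E0 z00 z01 fn0 Cf0.
set f1 := fD e1 in E1 z10 z11 fn1 Cf1.
set al := ip f0 e2 in E0; set be := ip f1 e2 in E1.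
rewrite z00 // z01 // !scale0r !add0r in E0.
rewrite z10 // z11 // !scale0r !add0r in E1.
set g := be *: e0 - al *: e1.
have Cg : C g = m0 *: g by rewrite /g (linB linC) !(linZ linC) (ce0 eb) ce1'; vsolve.
have fg : fD g = 0.
  rewrite /g (linB linfD) !(linZ linfD) -/f0 -/f1 E0 E1; vsolve.
have g0 : g = 0.
  apply/eqP; apply/negPn/negP => gn.
  by move: (pairing Cg (m0n eb)).2 => /(_ h1 h2 gn); rewrite fg eqxx.
have [o10 o20 o21] := EBo eb.
have b0 : be = 0.
  have : ip g e0 = 0 by rewrite g0 ip0l.
  by rewrite /g ipBl !ipZl (n00 eb) o10 mulr0 mulr1 subr0.
have a0 : al = 0.
  have : ip g e1 = 0 by rewrite g0 ip0l.
  by rewrite /g ipBl !ipZl (n11 eb) (n01 eb) mulr0 mulr1 sub0r => /eqP; rewrite oppr_eq0 => /eqP.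
by move: (fn0 h1 h2 n0); rewrite E0 a0 scale0r eqxx.
Qed.

Lemma EB_D e0 e1 e2 m0 m1 m2 : EB3 e0 e1 e2 m0 m1 m2 -> m0 = -1 -> m1 = 1 \/ m2 = 1.
Proof.
move=> eb e0m; have [n0 _ _] := EBn0 eb.
have Ce : C e0 = - e0 by rewrite (ce0 eb) e0m scaleN1r.
have [h11 h21 hV] := eigm1 Ce.
have Cy : C (V1s e0) = 1 *: V1s e0 by rewrite scale1r; apply: eig1c => //; rewrite -c12s h11 (lin0 l2s).
have [E z0 z1 z2] := EBeig eb Cy (oner_neq0 _).
case: (eqVneq m1 1) => [->|q1]; first by left.
case: (eqVneq m2 1) => [->|q2]; first by right.
have y0 : V1s e0 = 0.
  by rewrite E z0 ?e0m ?m1n1 // z1 // z2 // !scale0r !addr0.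
by move: n0; rewrite -hV y0 (lin0 l1) eqxx.
Qed.

Lemma EB_E e0 e1 e2 m0 m1 m2 : EB3 e0 e1 e2 m0 m1 m2 -> m0 = -1 -> m1 = -1 -> False.
Proof.
move=> eb e0m e1m; have [n0 n1 _] := EBn0 eb.
have Ce0 : C e0 = - e0 by rewrite (ce0 eb) e0m scaleN1r.
have Ce1 : C e1 = - e1 by rewrite (ce1 eb) e1m scaleN1r.
have [h11 h21 hV] := eigm1 Ce0.
have [k11 k21 kV] := eigm1 Ce1.
have Cy0 : C (V1s e0) = 1 *: V1s e0 by rewrite scale1r; apply: eig1c => //; rewrite -c12s h11 (lin0 l2s).
have Cy1 : C (V1s e1) = 1 *: V1s e1 by rewrite scale1r; apply: eig1c => //; rewrite -c12s k11 (lin0 l2s).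
have m1n := m1n1.
have [E0 z00 z01 _] := EBeig eb Cy0 (oner_neq0 _).
have [E1 z10 z11 _] := EBeig eb Cy1 (oner_neq0 _).
rewrite e0m e1m in z00 z01 z10 z11.
rewrite z00 // z01 // !scale0r !add0r in E0.
rewrite z10 // z11 // !scale0r !add0r in E1.
set al := ip (V1s e0) e2 in E0; set be := ip (V1s e1) e2 in E1.
set g := be *: e0 - al *: e1.
have Vg : V1s g = 0 by rewrite /g (linB l1s) !(linZ l1s) E0 E1; vsolve.
have g0 : g = 0.
  have : V1 (V1s g) = g by rewrite /g (linB l1s) !(linZ l1s) (linB l1) !(linZ l1) hV kV.
  by rewrite Vg (lin0 l1).
have [o10 o20 o21] := EBo eb.
have b0 : be = 0.
  have : ip g e0 = 0 by rewrite g0 ip0l.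
  by rewrite /g ipBl !ipZl (n00 eb) o10 mulr0 mulr1 subr0.
by move: n1; rewrite -kV E1 b0 scale0r (lin0 l1) eqxx.
Qed.

Lemma EB_F e0 e1 e2 m0 m1 m2 : irreducible_pair ip V1 V1s V2 V2s ->
  EB3 e0 e1 e2 m0 m1 m2 -> m0 = 1 -> m1 = 1 -> False.
Proof.
move=> irr eb e0m e1m; have [n0 n1 _] := EBn0 eb.
have Ce0 : C e0 = e0 by rewrite (ce0 eb) e0m scale1r.
have Ce1 : C e1 = e1 by rewrite (ce1 eb) e1m scale1r.
have [w0 _] := CW (ce0 eb) (m0n eb).
have [w1 _] := CW (ce1 eb) (m1n eb).
have [p0 q0] := eig1 Ce0 w0.
have [p1 q1] := eig1 Ce1 w1.
have aux : forall x0 x', V1s x0 = 0 -> V2s x0 = 0 -> V1s x' = 0 -> V2s x' = 0 ->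
    x0 != 0 -> x' != 0 -> ip x0 x' = 0 -> ip (V1 x0) e2 = 0 -> False.
  move=> x0 x' h1 h2 h1' h2' nz nz' o o2.
  apply: (reduc irr h1 h2 h1' h2' nz nz' o).
  set z := V1 x0.
  have Cz : C z = 0.
    by rewrite (cexp eb) /z o2 !a1 p0 p1 !ip0r !mulr0 !scale0r !addr0.
  have : C z = - V2 (V2s z).
    rewrite /defect /z i1 c12s i1 h2 (lin0 l2) (lin0 l1) addr0; vsolve.
  rewrite Cz => /eqP; rewrite eq_sym oppr_eq0 => /eqP h.
  by rewrite -[V2s z]i2 h (lin0 l2s).
set a0 := ip (V1 e0) e2; set a1' := ip (V1 e1) e2.
case: (eqVneq a0 0) => ha0.
  by apply: (aux e0 e1 p0 q0 p1 q1 n0 n1 (n01 eb) ha0).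
have [o10 o20 o21] := EBo eb.
pose x0 := a1' *: e0 - a0 *: e1.
pose x' := a0^* *: e0 + a1'^* *: e1.
apply: (aux x0 x').
- by rewrite /x0 (linB l1s) !(linZ l1s) p0 p1 !scaler0 subr0.
- by rewrite /x0 (linB l2s) !(linZ l2s) q0 q1 !scaler0 subr0.
- by rewrite /x' (linD l1s) !(linZ l1s) p0 p1 !scaler0 addr0.
- by rewrite /x' (linD l2s) !(linZ l2s) q0 q1 !scaler0 addr0.
- apply/negP => /eqP h.
  have : ip x0 e1 = 0 by rewrite h ip0l.
  rewrite /x0 ipBl !ipZl (n11 eb) (n01 eb) mulr0 mulr1 sub0r => /eqP.
  by rewrite oppr_eq0 (negbTE ha0).
- apply/negP => /eqP h.
  have : ip x' e0 = 0 by rewrite h ip0l.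
  rewrite /x' ipDl !ipZl (n00 eb) o10 mulr0 mulr1 addr0 => /eqP.
  by rewrite conjC_eq0 (negbTE ha0).
- rewrite /x0 /x' !(ipBl, ipDr, ipZl, ipZr) (n00 eb) (n11 eb) (n01 eb) o10 !cjK; ring.
- by rewrite /x0 (linB l1) !(linZ l1) ipBl !ipZl -/a0 -/a1'; ring.
Qed.

Definition goodEB := exists f0 f1 f2 l, EB3 f0 f1 f2 1 l (- l) /\ 0 < l < 1.

Lemma EB_N e0 e1 e2 m0 m1 m2 : EB3 e0 e1 e2 m0 m1 m2 -> m0 != 1 -> m0 != -1 ->
  m1 = - m0 -> goodEB.
Proof.
move=> eb h1 h2 e1m.
have nm1 : m1 != 1 by rewrite e1m eqr_oppLR.
have nm2 : m1 != -1 by rewrite e1m eqr_opp.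
case: (eqVneq m2 1) => [e2m|q1].
  have [rm /andP[lo hi]] := eig_range (ce0 eb) (n00 eb) (m0n eb).
  case: (real_ltgt0P rm) => hs.
  - exists e2, e0, e1, m0; split.
      by move: (EB_swap01 (EB_swap12 eb)); rewrite e2m e1m.
    by rewrite hs /= lt_neqAle h1 hi.
  - exists e2, e1, e0, m1; split.
      by move: (EB_swap01 (EB_swap12 (EB_swap01 eb))); rewrite e2m e1m opprK.
    rewrite e1m oppr_gt0 hs /= lt_neqAle eqr_oppLR h2 /=.
    by rewrite lerNl.
  - by move: (m0n eb); rewrite hs eqxx.
have eb' := EB_swap01 (EB_swap12 eb).
case: (eqVneq m2 (-1)) => [e2m|q2].
  case: (EB_D eb' e2m) => h; first by move: h1; rewrite h eqxx.
  by move: nm1; rewrite h eqxx.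
case: (EB_B eb' q1 q2) => h.
  have e : m1 = m2 by rewrite e1m h opprK.
  by case: (EB_C (EB_swap12 (EB_swap01 eb)) e nm1 nm2).
have e : m0 = m2 by apply: oppr_inj; rewrite -e1m h.
by case: (EB_C (EB_swap12 eb) e h1 h2).
Qed.

Lemma EB_N' e0 e1 e2 m0 m1 m2 : EB3 e0 e1 e2 m0 m1 m2 -> m0 != 1 -> m0 != -1 -> goodEB.
Proof.
move=> eb h1 h2; case: (EB_B eb h1 h2) => h; first exact: EB_N eb h1 h2 h.
exact: EB_N (EB_swap12 eb) h1 h2 h.
Qed.

Lemma EB_class e0 e1 e2 m0 m1 m2 : irreducible_pair ip V1 V1s V2 V2s ->
  EB3 e0 e1 e2 m0 m1 m2 -> goodEB.
Proof.
move=> irr eb.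
case: (eqVneq m0 1) => [u1|u1]; last case: (eqVneq m0 (-1)) => [u2|u2];
  last exact: EB_N' eb u1 u2.
- case: (eqVneq m1 1) => [b1|b1]; first by case: (EB_F irr eb u1 b1).
  case: (eqVneq m1 (-1)) => [b2|b2]; last exact: EB_N' (EB_swap01 eb) b1 b2.
  case: (eqVneq m2 1) => [c1|c1]; first by case: (EB_F irr (EB_swap12 eb) u1 c1).
  case: (eqVneq m2 (-1)) => [c2|c2]; last exact: EB_N' (EB_swap01 (EB_swap12 eb)) c1 c2.
  by case: (EB_E (EB_swap12 (EB_swap01 eb)) b2 c2).
- case: (eqVneq m1 (-1)) => [b2|b2]; first by case: (EB_E eb u2 b2).
  case: (eqVneq m1 1) => [b1|b1]; last exact: EB_N' (EB_swap01 eb) b1 b2.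
  case: (eqVneq m2 (-1)) => [c2|c2]; first by case: (EB_E (EB_swap12 eb) u2 c2).
  case: (eqVneq m2 1) => [c1|c1]; last exact: EB_N' (EB_swap01 (EB_swap12 eb)) c1 c2.
  by case: (EB_F irr (EB_swap12 (EB_swap01 eb)) b1 c1).
Qed.

Ltac vsolvef := apply: ip_eq => ?; rewrite ?(ipDl, ipBl, ipZl, ipNl, ip0l); field.

Lemma nsq_par u v : ip (u + v) (u + v) <= 2%:R * (ip u u + ip v v).
Proof.
have h := ipP (u - v).
have e : 2%:R * (ip u u + ip v v) - ip (u + v) (u + v) = ip (u - v) (u - v).
  rewrite !(ipDl, ipBl, ipDr, ipBr, ipNl, ipNr); ring.
by rewrite -subr_ge0 e.
Qed.

Lemma nsqZ a v : ip (a *: v) (a *: v) = a * a^* * ip v v.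
Proof. rewrite ipZl ipZr; ring. Qed.

Lemma nsq4 u0 u1 u2 u3 : ip (u0 + u1 + u2 + u3) (u0 + u1 + u2 + u3) <=
   8%:R * (ip u0 u0 + ip u1 u1 + ip u2 u2 + ip u3 u3).
Proof.
have p1 := nsq_par (u0 + u1 + u2) u3.
have p2 := nsq_par (u0 + u1) u2.
have p3 := nsq_par u0 u1.
have t2 : (0 : R[i]) < 2%:R by rewrite ltr0n.
apply: (le_trans p1).
apply: (le_trans (y := 2%:R * (2%:R * (ip (u0 + u1) (u0 + u1) + ip u2 u2) + ip u3 u3))).
  by rewrite ler_pM2l // lerD2r.
apply: (le_trans (y := 2%:R * (2%:R * (2%:R * (ip u0 u0 + ip u1 u1) + ip u2 u2) + ip u3 u3))).
  by rewrite ler_pM2l // lerD2r ler_pM2l // lerD2r.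
rewrite -subr_ge0.
have -> : 8%:R * (ip u0 u0 + ip u1 u1 + ip u2 u2 + ip u3 u3) -
   2%:R * (2%:R * (2%:R * (ip u0 u0 + ip u1 u1) + ip u2 u2) + ip u3 u3) =
   4%:R * ip u2 u2 + 6%:R * ip u3 u3 by ring.
by rewrite addr_ge0 // mulr_ge0 ?ler0n ?ipP.
Qed.

Lemma nsq_coef b y f : ip f f = 1 ->
  ip ((b * ip y f) *: f) ((b * ip y f) *: f) <= b * b^* * ip y y.
Proof.
move=> f1; rewrite nsqZ f1 mulr1 cjM.
have -> : b * ip y f * (b^* * (ip y f)^*) = b * b^* * (ip y f * (ip y f)^*) by ring.
rewrite ler_wpM2l ?mul_conjC_ge0 //.
by have := ip_CS y f; rewrite f1 mulr1.
Qed.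

Lemma spec_part f0 f1 f2 m0 m1 m2 z : EB3 f0 f1 f2 m0 m1 m2 ->
  z != 0 -> m0 != z -> m1 != z -> m2 != z -> ~ spectrum ip C z.
Proof.
move=> eb z0 q0 q1 q2; apply; rewrite /spectrum.
have [o10 o20 o21] := EBo eb.
set a := - z^-1.
set b0 := m0 / (z * (m0 - z)); set b1 := m1 / (z * (m1 - z)); set b2 := m2 / (z * (m2 - z)).
pose S y := a *: y + (b0 * ip y f0) *: f0 + (b1 * ip y f1) *: f1 + (b2 * ip y f2) *: f2.
have d0 : m0 - z != 0 by rewrite subr_eq0.
have d1 : m1 - z != 0 by rewrite subr_eq0.
have d2 : m2 - z != 0 by rewrite subr_eq0.
exists S; split; [split|].
- move=> c x y; rewrite /S !(ipDl, ipZl); vsolve.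
- exists (8%:R * (a * a^* + b0 * b0^* + b1 * b1^* + b2 * b2^*)) => y.
  rewrite /nsq /S; apply: (le_trans (nsq4 _ _ _ _)).
  rewrite -[in X in _ <= X]mulrA ler_pM2l ?ltr0n // !mulrDl.
  rewrite nsqZ; apply: lerD; [apply: lerD; [apply: lerD|]|].
  - by [].
  - exact: nsq_coef (n00 eb).
  - exact: nsq_coef (n11 eb).
  - exact: nsq_coef (n22 eb).
move=> x; split.
- have [k0 k1 k2] := EBcx eb x.
  have k0' : ip (C x - z *: x) f0 = (m0 - z) * ip x f0 by rewrite ipBl k0 ipZl mulrBl.
  have k1' : ip (C x - z *: x) f1 = (m1 - z) * ip x f1 by rewrite ipBl k1 ipZl mulrBl.
  have k2' : ip (C x - z *: x) f2 = (m2 - z) * ip x f2 by rewrite ipBl k2 ipZl mulrBl.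
  rewrite /S k0' k1' k2' (cexp eb x) /a /b0 /b1 /b2; vsolvef.
  by rewrite d0 d1 d2 z0.
- rewrite /S !(linD linC) !(linZ linC) (ce0 eb) (ce1 eb) (ce2 eb) (cexp eb x) /a /b0 /b1 /b2; vsolvef.
  by rewrite d0 d1 d2 z0.
Qed.

Lemma sum3 (V : zmodType) (F : 'I_3 -> V) : \sum_(i < 3) F i =
  F (@Ordinal 3 0 isT) + F (@Ordinal 3 1 isT) + F (@Ordinal 3 2 isT).
Proof.
rewrite big_ord_recl big_ord_recl big_ord_recl big_ord0 addr0 addrA.
by congr (F _ + F _ + F _); apply: val_inj.
Qed.

Lemma final f0 f1 f2 l : EB3 f0 f1 f2 1 l (- l) -> 0 < l < 1 ->
  exists lam : R[i],
    [/\ 0 < lam < 1,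
        (forall z : R[i], (spectrum ip C z /\ 0 < z < 1) <-> z = lam),
        (forall mu : R[i], 0 < mu < 1 ->
           (forall z : R[i], (spectrum ip C z /\ 0 < z < 1) <-> z = mu) ->
           mu = lam)
      & restr_kerperp_unitarily_diag ip C (diag3 1 lam (- lam))].
Proof.
move=> eb /andP[lp lq].
have [n0 n1 n2] := EBn0 eb.
have [o10 o20 o21] := EBo eb.
have charz : forall z : R[i], (spectrum ip C z /\ 0 < z < 1) <-> z = l.
  move=> z; split.
    move=> [sp /andP[z0 z1]]; apply/eqP; apply/negPn/negP => hne.
    apply: (spec_part eb) sp.
    - by rewrite gt_eqF.
    - by rewrite eq_sym lt_eqF.
    - by rewrite eq_sym.
    - apply/negP => /eqP h; move: z0; rewrite -h oppr_gt0 => h'.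
      by move: (lt_trans h' lp); rewrite ltxx.
  move=> ->; split; last by rewrite lp lq.
  move=> [S [[Slin _] hS]].
  have := (hS f1).1; rewrite (ce1 eb) subrr.
  have -> : S 0 = 0.
    have := Slin 1 0 0; rewrite scaler0 addr0 scale1r => /eqP.
    by rewrite -{1}[S 0]addr0 eq_sym (inj_eq (addrI _)) => /eqP.
  by move=> h; move: n1; rewrite -h eqxx.
exists l; split => //.
- by rewrite lp lq.
- by move=> mu hmu hc; apply/charz/hc.
pose ef (i : 'I_3) := if val i == 0%N then f0 else if val i == 1%N then f1 else f2.
exists ef; split.
- move=> i j; case: i => [[|[|[|i]]] hi] //; case: j => [[|[|[|j]]] hj] //=.
  all: rewrite /ef /=.
  all: try by rewrite ?(n00 eb) ?(n11 eb) ?(n22 eb) ?(n01 eb) ?(n02 eb) ?(n12 eb) ?o10 ?o20 ?o21.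
- move=> y; split.
  + move=> hy; exists (fun i => ip y (ef i)); rewrite sum3 /ef /=.
    set r := y - (ip y f0 *: f0 + ip y f1 *: f1 + ip y f2 *: f2).
    have [c0 c1 c2] := EBc eb (ip y f0) (ip y f1) (ip y f2).
    have r0 : ip r f0 = 0 by rewrite /r ipBl c0 subrr.
    have r1 : ip r f1 = 0 by rewrite /r ipBl c1 subrr.
    have r2 : ip r f2 = 0 by rewrite /r ipBl c2 subrr.
    have Cr : C r = 0 by rewrite (cexp eb) r0 r1 r2 !mulr0 !scale0r !addr0.
    have yr := hy r Cr.
    have sr : ip (ip y f0 *: f0 + ip y f1 *: f1 + ip y f2 *: f2) r = 0.
      by rewrite !(ipDl, ipZl) !(ipC r) r0 r1 r2 !cj0 !mulr0 !addr0.
    have : ip r r = 0 by rewrite {1}/r ipBl yr sr subrr.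
    by move/ipD/eqP; rewrite subr_eq0 => /eqP.
  + move=> [c ->] x Cx; rewrite ip_suml sum3 /ef /=.
    have k : forall f m, C f = m *: f -> m != 0 -> ip f x = 0.
      move=> f m hf m0.
      have : m * ip f x = 0 by rewrite -ipZl -hf C_sa Cx ip0r.
      by move/eqP; rewrite mulf_eq0 (negbTE m0) /= => /eqP.
    rewrite (k _ _ (ce0 eb) (m0n eb)) (k _ _ (ce1 eb) (m1n eb)) (k _ _ (ce2 eb) (m2n eb)).
    by rewrite !mulr0 !addr0.
- move=> i; case: i => [[|[|[|i]]] hi] //=; rewrite /ef /diag3 /=.
  + exact: (ce0 eb).
  + exact: (ce1 eb).
  + exact: (ce2 eb).
Qed.

Lemma comb_closed (S : H -> Prop) : S 0 -> (forall a u v, S u -> S v -> S (a *: u + v)) ->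
  forall n (c : 'I_n -> R[i]) (g : 'I_n -> H), (forall j, S (g j)) -> S (\sum_(j < n) c j *: g j).
Proof.
move=> h0 hc n c g hg; elim/big_rec: _ => // i s _ hs; exact: hc.
Qed.

Lemma sum_delta n (F : 'I_n -> H) k : \sum_(i < n) (i == k)%:R *: F i = F k.
Proof.
rewrite (bigD1 k) //= eqxx scale1r big1 ?addr0 // => i /negbTE ->; by rewrite scale0r.
Qed.

Lemma sum_deltaC n (F : 'I_n -> R[i]) k : \sum_(i < n) F i * (i == k)%:R = F k.
Proof.
rewrite (bigD1 k) //= eqxx mulr1 big1 ?addr0 // => i /negbTE ->; by rewrite mulr0.
Qed.

Definition orthon n (f : 'I_n -> H) := forall i j, ip (f i) (f j) = (i == j)%:R.

Lemma span_coef n (f : 'I_n -> H) (al : 'I_n -> R[i]) v : orthon f ->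
  v = \sum_(k < n) al k *: f k -> v = \sum_(k < n) ip v (f k) *: f k.
Proof.
move=> o ->; apply: eq_bigr => k _; congr (_ *: _).
rewrite ip_suml; under eq_bigr do rewrite o.
by rewrite sum_deltaC.
Qed.

Definition inS n (f : 'I_n -> H) v := exists al : 'I_n -> R[i], v = \sum_(k < n) al k *: f k.

Lemma inS_comb n (f : 'I_n -> H) m (c : 'I_m -> R[i]) g :
  (forall j, inS f (g j)) -> inS f (\sum_(j < m) c j *: g j).
Proof.
apply: comb_closed.
  by exists (fun=> 0); rewrite big1 // => k _; rewrite scale0r.
move=> a u v [al ->] [be ->]; exists (fun k => a * al k + be k).
rewrite scaler_sumr -big_split /=; apply: eq_bigr => k _.
by rewrite scalerDl scalerA.
Qed.

Lemma inS_f n (f : 'I_n -> H) k : inS f (f k).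
Proof. by exists (fun i => (i == k)%:R); rewrite sum_delta. Qed.

Open Scope sesquilinear_scope.

Definition hP n (P : 'M[R[i]]_n) (g : 'I_n -> H) k := \sum_(j < n) (P k j)^* *: g j.

Lemma hP_ip n (P : 'M[R[i]]_n) (g : 'I_n -> H) (phi : H -> H) : lin phi ->
  forall k l, ip (phi (hP P g k)) (hP P g l) =
    \sum_(j < n) \sum_(m < n) (P k j)^* * P l m * ip (phi (g j)) (g m).
Proof.
move=> lp k l; rewrite /hP (lin_sum lp) ip_suml; apply: eq_bigr => j _.
rewrite ip_sumr mulr_sumr; apply: eq_bigr => m _; rewrite cjK; ring.
Qed.

Lemma hP_inv n (P : 'M[R[i]]_n) (g : 'I_n -> H) : P \is unitarymx ->
  forall j, g j = \sum_(k < n) P k j *: hP P g k.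
Proof.
move=> uP j.
have e : P^t* *m P = 1%:M by rewrite -[P^t*]mul1mx mulmxKtV.
rewrite /hP; under eq_bigr do rewrite scaler_sumr.
rewrite exchange_big /=.
rewrite -[LHS]sum_delta; apply: eq_bigr => i _.
rewrite (eq_bigr (fun k => (P k j * (P k i)^*) *: g i)); last by move=> k _; rewrite scalerA.
rewrite -scaler_suml; congr (_ *: _).
have := congr1 (fun M : 'M[R[i]]_n => M i j) e; rewrite !mxE => <-.
by apply: eq_bigr => k _; rewrite !mxE mulrC.
Qed.

Lemma herm_diag n (g : 'I_n -> H) (phi : H -> H) : lin phi ->
  (forall i j, (ip (phi (g i)) (g j))^* = ip (phi (g j)) (g i)) ->
  exists (P : 'M[R[i]]_n) (d : 'rV[R[i]]_n), P \is unitarymx /\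
    forall k l, ip (phi (hP P g k)) (hP P g l) = (k == l)%:R * d 0 k.
Proof.
move=> lp hh.
pose A := \matrix_(m, j) ip (phi (g j)) (g m).
have hA : A^t* = A by apply/matrixP => m j; rewrite !mxE hh.
have nA : A \is normalmx by apply/normalmxP; rewrite hA.
have eA := orthomx_spectralP nA.
set P := spectralmx A in eA; set d := spectral_diag A in eA.
have uP : P \is unitarymx := spectral_unitarymx A.
exists P, d; split => // k l.
have e2 : P *m A *m P^t* = diag_mx d.
  rewrite eA invmx_unitary // !mulmxA (unitarymxP uP) mul1mx.
  by rewrite -mulmxA (unitarymxP uP) mulmx1.
have := congr1 (fun M : 'M[R[i]]_n => M l k) e2; rewrite !mxE => h.
rewrite hP_ip //.
have -> : (k == l)%:R * d 0 k = d 0 l *+ (l == k).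
  case: (eqVneq k l) => [->|ne]; first by rewrite mul1r.
  by rewrite mulr0n mul0r.
rewrite -h; apply: eq_bigr => j _.
rewrite !mxE mulr_suml; apply: eq_bigr => m _; rewrite !mxE; ring.
Qed.

Lemma inS_scale n (f : 'I_n -> H) a v : inS f v -> inS f (a *: v).
Proof.
move=> [al ->]; exists (fun k => a * al k); rewrite scaler_sumr.
by apply: eq_bigr => k _; rewrite scalerA.
Qed.

Definition inR v := exists x, v = C x.

Lemma inR_comb n (c : 'I_n -> R[i]) (g : 'I_n -> H) :
  (forall j, inR (g j)) -> inR (\sum_(j < n) c j *: g j).
Proof.
apply: comb_closed; first by exists 0; rewrite (lin0 linC).
by move=> a u v [x ->] [y ->]; exists (a *: x + y); rewrite linC.
Qed.

Lemma inR_scale a v : inR v -> inR (a *: v).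
Proof. by move=> [x ->]; exists (a *: x); rewrite (linZ linC). Qed.

Lemma linid : lin (fun x => x).
Proof. by []. Qed.

Lemma construct (b : 'I_3 -> H) :
  (forall c : 'I_3 -> R[i], \sum_(i < 3) c i *: b i = 0 -> forall i, c i = 0) ->
  (forall y, (exists x, y = C x) <-> exists c : 'I_3 -> R[i], y = \sum_(i < 3) c i *: b i) ->
  exists e0 e1 e2 m0 m1 m2, EB3 e0 e1 e2 m0 m1 m2.
Proof.
move=> ind sp.
have bR : forall j, inR (b j).
  move=> j; apply/sp; exists (fun i => (i == j)%:R); by rewrite sum_delta.
have [P [d [uP hd]]] := @herm_diag 3 b (fun x => x) linid (fun i j => esym (ipC (b i) (b j))).
set h := hP P b in hd.
have hn : forall k, h k != 0.
  move=> k; apply/negP => /eqP h0.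
  have z := ind (fun j => (P k j)^*) h0.
  have := congr1 (fun M : 'M[R[i]]_3 => M k k) (unitarymxP uP).
  rewrite !mxE eqxx big1 // => [|j _]; last by rewrite !mxE z mulr0.
  by move/eqP; rewrite eq_sym oner_eq0.
have dk : forall k, d 0 k = ip (h k) (h k) by move=> k; rewrite hd eqxx mul1r.
have dp : forall k, 0 < d 0 k by move=> k; rewrite dk ip_neq0.
pose sq k := sqrtC (d 0 k).
have sqp : forall k, 0 < sq k by move=> k; rewrite sqrtC_gt0.
have sqr : forall k, (sq k)^* = sq k by move=> k; rewrite conj_Creal // gtr0_real.
have sq2 : forall k, sq k * sq k = d 0 k by move=> k; rewrite -expr2 sqrtCK.
have sqn : forall k, sq k != 0 by move=> k; rewrite gt_eqF.
pose f k := (sq k)^-1 *: h k.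
have ofo : orthon f.
  move=> k l; rewrite /f ipZl ipZr hd.
  case: (eqVneq k l) => [->|ne]; last by rewrite mul0r !mulr0.
  rewrite mul1r cjV sqr -sq2 mulr1n; field; exact: sqn.
have hf : forall k, h k = sq k *: f k by move=> k; rewrite /f scalerA mulfV ?scale1r.
have fR : forall k, inR (f k) by move=> k; apply: inR_scale; apply: inR_comb.
have CS : forall x, inS f (C x).
  move=> x; have [c ->] : exists c, C x = \sum_(i < 3) c i *: b i by apply/sp; exists x.
  apply: inS_comb => j; rewrite (hP_inv b uP j); apply: inS_comb => k.
  rewrite -/h hf; apply: inS_scale; exact: inS_f.
have [Q [dl [uQ hq]]] := @herm_diag 3 f C linC
   (fun i j => etrans (esym (ipC _ _)) (esym (C_sa (f j) (f i)))).
set e := hP Q f in hq.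
have oe : orthon e.
  move=> k l; rewrite /e (hP_ip _ _ linid).
  have := congr1 (fun M : 'M[R[i]]_3 => M l k) (unitarymxP uQ); rewrite !mxE eq_sym => <-.
  apply: eq_bigr => j _.
  under eq_bigr do rewrite ofo.
  rewrite (bigD1 j) //= eqxx mulr1 big1 ?addr0 => [|m /negbTE]; last first.
    by rewrite eq_sym => ->; rewrite mulr0.
  by rewrite !mxE mulrC.
have CSe : forall x, C x = \sum_(k < 3) ip (C x) (e k) *: e k.
  move=> x; have [al hal] : inS e (C x).
    have [be ->] := CS x; apply: inS_comb => j; rewrite (hP_inv f uQ j); apply: inS_comb => k.
    exact: inS_f.
  exact: span_coef oe hal.
have Ce : forall k, C (e k) = dl 0 k *: e k.
  move=> k; rewrite CSe; under eq_bigr do rewrite hq.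
  rewrite (bigD1 k) //= eqxx mul1r big1 ?addr0 // => l; rewrite eq_sym => /negbTE ->; by rewrite mul0r scale0r.
have eR : forall k, inR (e k) by move=> k; apply: inR_comb.
have dlr : forall k, (dl 0 k)^* = dl 0 k.
  move=> k; have := hq k k; rewrite eqxx mul1r => <-.
  by rewrite -ipC -C_sa.
have dln : forall k, dl 0 k != 0.
  move=> k; apply/negP => /eqP h0.
  have [w hw] := eR k.
  have := oe k k; rewrite eqxx {1}hw C_sa Ce h0 scale0r ip0r => /eqP.
  by rewrite eq_sym oner_eq0.
pose o0 := @Ordinal 3 0 isT; pose o1 := @Ordinal 3 1 isT; pose o2 := @Ordinal 3 2 isT.
exists (e o0), (e o1), (e o2), (dl 0 o0), (dl 0 o1), (dl 0 o2); split => //.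
move=> x; rewrite CSe sum3 -/o0 -/o1 -/o2.
have k : forall k, ip (C x) (e k) = dl 0 k * ip x (e k).
  by move=> k; rewrite C_sa Ce ipZr dlr.
by rewrite !k.
Qed.

Lemma main_sec : irreducible_pair ip V1 V1s V2 V2s -> rank_eq C 3 ->
  exists lam : R[i],
    [/\ 0 < lam < 1,
        (forall z : R[i], (spectrum ip C z /\ 0 < z < 1) <-> z = lam),
        (forall mu : R[i], 0 < mu < 1 ->
           (forall z : R[i], (spectrum ip C z /\ 0 < z < 1) <-> z = mu) ->
           mu = lam)
      & restr_kerperp_unitarily_diag ip C (diag3 1 lam (- lam))].
Proof.
move=> irr [b [ind sp]].
have [e0 [e1 [e2 [m0 [m1 [m2 eb]]]]]] := construct ind sp.
have [f0 [f1 [f2 [l [eb' hl]]]]] := EB_class irr eb.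
exact: final eb' hl.
Qed.
End Main.

Theorem proposition4p5 (R : realType) (H : lmodType R[i]) (ip : H -> H -> R[i])
    (V1 V1s V2 V2s : H -> H) :
  hilbert_space ip ->
  three_finite_pair ip V1 V1s V2 V2s ->
  irreducible_pair ip V1 V1s V2 V2s ->
  exists lam : R[i],
    [/\ 0 < lam < 1,
        (forall z : R[i], (spectrum ip (defect V1 V1s V2 V2s) z /\ 0 < z < 1) <-> z = lam),
        (forall mu : R[i], 0 < mu < 1 ->
           (forall z : R[i], (spectrum ip (defect V1 V1s V2 V2s) z /\ 0 < z < 1) <-> z = mu) ->
           mu = lam)
      & restr_kerperp_unitarily_diag ip (defect V1 V1s V2 V2s) (diag3 1 lam (- lam))].
Proof.
move=> [ipL ipC ipP ipD _] [[[[[[[l1 _] [[l1s _] a1]] i1] [[[l2 _] [[l2s _] a2]] i2] c12] _] _ [_ nT]] rk] irr.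
by apply: main_sec.
Qed.
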